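(* Let $g\ge1$, $n\ge3$ and $x\in A_g^n$. Then: \begin{enumerate} \item $1/g>x_1\ge x_n>0$; \item for no $k\in\{1,\dots,n-1\}$ do $x_k=x_{k+1}$ and $x_1\cdots x_k=g(x_{k+1}+\dots+x_n)$ hold simultaneously; \item if for some $1\le k\le n-1$ the equality $x_1\cdots x_i=g(x_{i+1}+\dots+x_n)$ holds for all $i\le k$, then $x_i=1/s_{g,i}$ for all $i=1,\dots,k$. \end{enumerate}
   Context: For $g,n\ge1$, $A_g^n\subseteq\mathbb{R}^n$ is the set of $(x_1,\dots,x_n)$ with (A1) $x_1\ge\dots\ge x_n\ge0$; (A2) $x_1+\dots+x_n=1/g$; (A3) $x_1\cdots x_k\le g(x_{k+1}+\dots+x_n)$ for all $k=1,\dots,n-1$. Sylvester sequence: $s_{g,1}=g+1$, $s_{g,k+1}=s_{g,k}(s_{g,k}-1)+1$. *)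

(* Defs.v *)
From Stdlib Require Import Reals Lra Lia.
Open Scope R_scope.

(* Points of R^n are represented as x : nat -> R, using the 1-based
   coordinates x 1, ..., x n (values at other indices are irrelevant). *)

Fixpoint prodx (x : nat -> R) (k : nat) : R :=
  match k with
  | O => 1
  | S k' => prodx x k' * x (S k')
  end.

Fixpoint sumx (x : nat -> R) (k : nat) : R :=
  match k with
  | O => 0
  | S k' => sumx x k' + x (S k')
  end.

Definition tailsum (x : nat -> R) (k n : nat) : R := sumx x n - sumx x k.

Definition in_A (g n : nat) (x : nat -> R) : Prop :=
  (forall i, (1 <= i < n)%nat -> x i >= x (S i)) /\ x n >= 0 /\
  sumx x n = / INR g /\
  (forall k, (1 <= k <= n - 1)%nat -> prodx x k <= INR g * tailsum x k n).

(* Sylvester sequence s_{g,k}, k >= 1; sylv g 0 is an unused dummy value. *)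
Fixpoint sylv (g k : nat) : nat :=
  match k with
  | O => 0
  | S O => g + 1
  | S k' => let s := sylv g k' in s * (s - 1) + 1
  end.

(* Main.v *)
Require Import Defs.
From Stdlib Require Import Reals.
From Stdlib Require Import Lra Lia Psatz.
Open Scope R_scope.

Lemma mono_d g n x : in_A g n x -> forall d i, (1<=i)%nat -> (i+d<=n)%nat -> x i >= x (i+d)%nat.
Proof.
  intros [H1 _] d; induction d; intros i Hi Hd.
  - rewrite Nat.add_0_r; lra.
  - specialize (IHd i Hi ltac:(lia)).
    assert (x (i+d)%nat >= x (S (i+d))) by (apply H1; lia).
    replace (i + S d)%nat with (S (i+d)) by lia. lra.
Qed.

Lemma mono g n x : in_A g n x -> forall i j, (1<=i<=j)%nat -> (j<=n)%nat -> x i >= x j.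
Proof.
  intros H i j Hij Hj. replace j with (i + (j-i))%nat by lia.
  apply (mono_d g n x H); lia.
Qed.

Lemma nonneg g n x : in_A g n x -> forall i, (1<=i<=n)%nat -> x i >= 0.
Proof.
  intros H i Hi. assert (x i >= x n) by (apply (mono g n x H); lia).
  destruct H as [_ [H _]]. lra.
Qed.

Lemma prod_nonneg g n x : in_A g n x -> forall m, (m<=n)%nat -> 0 <= prodx x m.
Proof.
  intros H m; induction m; simpl; intros Hm. lra.
  assert (x (S m) >= 0) by (apply (nonneg g n x H); lia).
  apply Rmult_le_pos; [apply IHm; lia| lra].
Qed.

Lemma prod_le_x1 g n x : in_A g n x -> (forall i, (1<=i<=n)%nat -> x i <= 1) ->
  forall m, (1<=m<=n)%nat -> prodx x m <= x 1%nat.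
Proof.
  intros H Hle m; induction m; intros Hm. lia.
  destruct m. simpl; lra.
  change (prodx x (S (S m))) with (prodx x (S m) * x (S (S m))).
  assert (x (S (S m)) >= 0) by (apply (nonneg g n x H); lia).
  assert (x (S (S m)) <= 1) by (apply Hle; lia).
  assert (0 <= prodx x (S m)) by (apply (prod_nonneg g n x H); lia).
  specialize (IHm ltac:(lia)). nra.
Qed.

Lemma prod_zero x : forall m, prodx x m = 0 -> exists j, (1<=j<=m)%nat /\ x j = 0.
Proof.
  induction m; simpl; intros H. lra.
  apply Rmult_integral in H; destruct H as [H|H].
  - destruct (IHm H) as [j [Hj Hx]]. exists j; split; [lia|auto].
  - exists (S m); split; [lia|auto].
Qed.

Lemma sum_zero x : forall m d, (forall j, (m<j<=m+d)%nat -> x j = 0) -> sumx x (m+d) = sumx x m.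
Proof.
  intros m d; induction d; intros H.
  - rewrite Nat.add_0_r. reflexivity.
  - replace (m + S d)%nat with (S (m+d)) by lia. simpl.
    rewrite H by lia. rewrite IHd. ring. intros; apply H; lia.
Qed.

Lemma ginv_pos g : (1 <= g)%nat -> 0 < / INR g.
Proof. intros; apply Rinv_0_lt_compat, lt_0_INR; lia. Qed.

Lemma xn_pos g n x : (1<=g)%nat -> (2<=n)%nat -> in_A g n x -> x n > 0.
Proof.
  intros Hg Hn H.
  assert (Hxn : x n >= 0) by (destruct H as [_ [? _]]; auto).
  destruct (Req_dec (x n) 0) as [E|E]; [|lra].
  exfalso.
  assert (C : forall d, (d <= n-1)%nat -> forall j, (n-d<=j<=n)%nat -> x j = 0).
  { induction d; intros Hd j Hj.
    - replace j with n by lia; auto.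
    - set (k := (n - S d)%nat).
      assert (T : sumx x (k + (n-k)) = sumx x k) by (apply sum_zero; intros; apply IHd; lia).
      replace (k + (n-k))%nat with n in T by lia.
      destruct H as [H1 [H2 [H3 H4]]].
      assert (P := H4 k ltac:(lia)). unfold tailsum in P. rewrite T in P.
      assert (0 <= prodx x k) by (apply (prod_nonneg g n x (conj H1 (conj H2 (conj H3 H4)))); lia).
      assert (P0 : prodx x k = 0) by lra.
      destruct (prod_zero x k P0) as [j0 [Hj0 Xj0]].
      assert (x j0 >= x k) by (apply (mono g n x (conj H1 (conj H2 (conj H3 H4)))); lia).
      assert (x k >= 0) by (apply (nonneg g n x (conj H1 (conj H2 (conj H3 H4)))); lia).
      destruct (Nat.eq_dec j k) as [->|Ne]; [lra|].
      apply IHd; lia. }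
  assert (S0 : sumx x (0 + n) = sumx x 0) by (apply sum_zero; intros; apply (C (n-1)%nat); lia).
  simpl in S0. destruct H as [_ [_ [H3 _]]]. pose proof (ginv_pos g Hg). lra.
Qed.

Lemma P_le g n x : (1<=g)%nat -> in_A g n x -> forall j, (j <= n-1)%nat ->
  prodx x j <= INR g * tailsum x j n.
Proof.
  intros Hg H j Hj. destruct j.
  - simpl. unfold tailsum. destruct H as [_ [_ [H3 _]]]. rewrite H3. simpl.
    rewrite Rminus_0_r, Rinv_r. lra. apply not_0_INR; lia.
  - destruct H as [_ [_ [_ H4]]]. apply H4; lia.
Qed.

Lemma sylv_ge2 g : (1<=g)%nat -> forall i, (1<=i)%nat -> (2 <= sylv g i)%nat.
Proof.
  intros Hg i; induction i; intros Hi. lia.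
  destruct i. simpl; lia.
  specialize (IHi ltac:(lia)).
  change (sylv g (S (S i))) with (sylv g (S i) * (sylv g (S i) - 1) + 1)%nat. nia.
Qed.

Lemma sylv_SR g i : (1<=g)%nat -> (1<=i)%nat ->
  INR (sylv g (S i)) = INR (sylv g i) * (INR (sylv g i) - 1) + 1.
Proof.
  intros Hg Hi. pose proof (sylv_ge2 g Hg i Hi).
  destruct i. lia.
  change (sylv g (S (S i))) with (sylv g (S i) * (sylv g (S i) - 1) + 1)%nat.
  rewrite plus_INR, mult_INR, minus_INR by lia. simpl. ring.
Qed.

Theorem proposition3p6 (g n : nat) (x : nat -> R) :
  (1 <= g)%nat -> (3 <= n)%nat -> in_A g n x ->
  (/ INR g > x 1%nat /\ x 1%nat >= x n /\ x n > 0) /\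
  (forall k, (1 <= k <= n - 1)%nat ->
     ~ (x k = x (S k) /\ prodx x k = INR g * tailsum x k n)) /\
  (forall k, (1 <= k <= n - 1)%nat ->
     (forall i, (1 <= i <= k)%nat -> prodx x i = INR g * tailsum x i n) ->
     forall i, (1 <= i <= k)%nat -> x i = / INR (sylv g i)).
Proof.
  intros Hg Hn H.
  assert (Xn : x n > 0) by (apply (xn_pos g n x); auto; lia).
  assert (X1n : x 1%nat >= x n) by (apply (mono g n x H); lia).
  assert (Gge1 : 1 <= INR g) by (apply (le_INR 1); lia).
  assert (Ginv1 : / INR g <= 1).
  { rewrite <- Rinv_1. apply Rinv_le_contravar; lra. }
  assert (X1 : / INR g > x 1%nat).
  { assert (S1 : sumx x (1 + (n-1)) >= sumx x 1 + x n).
    { assert (forall d, (1 <= d <= n-1)%nat -> sumx x (1 + d) >= sumx x 1 + x (1+d)%nat).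
      { induction d; intros Hd. lia.
        destruct d. simpl; lra.
        specialize (IHd ltac:(lia)).
        replace (1 + S (S d))%nat with (S (1 + S d)) by lia. change (sumx x (S (1 + S d))) with (sumx x (1 + S d) + x (S (1+S d))).
        assert (x (S (1 + S d)) >= 0) by (apply (nonneg g n x H); lia).
        assert (x (1 + S d)%nat >= 0) by (apply (nonneg g n x H); lia). lra. }
      replace (x n) with (x (1 + (n-1))%nat) by (f_equal; lia). apply H0; lia. }
    replace (1 + (n-1))%nat with n in S1 by lia.
    destruct H as [_ [_ [H3 _]]]. simpl in S1. lra. }
  assert (Xle1 : forall i, (1<=i<=n)%nat -> x i <= 1).
  { intros i Hi. assert (x 1%nat >= x i) by (apply (mono g n x H); lia). lra. }
  assert (Xpos : forall i, (1<=i<=n)%nat -> x i > 0).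
  { intros i Hi. assert (x i >= x n) by (apply (mono g n x H); lia). lra. }
  split; [split; [lra|split; lra]|split].
  - intros k Hk [E1 E2].
    destruct (Nat.eq_dec k (n-1)) as [Ek|Ek].
    + subst k. replace (S (n-1)) with n in E1 by lia.
      replace (n-1)%nat with (S (n-2)) in E1, E2 by lia.
      change (prodx x (S (n-2))) with (prodx x (n-2) * x (S (n-2))) in E2.
      unfold tailsum in E2.
      assert (SS : sumx x n = sumx x (S (n-2)) + x n).
      { replace n with (S (S (n-2))) at 1 3 by lia. reflexivity. }
      rewrite SS in E2. rewrite E1 in E2.
      assert (PG : prodx x (n-2) = INR g).
      { apply (Rmult_eq_reg_r (x n)); [|lra]. lra. }
      assert (prodx x (n-2) <= x 1%nat) by (apply (prod_le_x1 g n x H Xle1); lia). lra.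
    + destruct k as [|j]. lia.
      assert (Hk1 := P_le g n x Hg H (S (S j)) ltac:(lia)).
      assert (Hk0 := P_le g n x Hg H j ltac:(lia)).
      change (prodx x (S (S j))) with (prodx x (S j) * x (S (S j))) in Hk1.
      change (prodx x (S j)) with (prodx x j * x (S j)) in E2, Hk1.
      unfold tailsum in *. simpl sumx in *.
      set (a := x (S j)) in *. set (t := sumx x n - (sumx x j + a)) in *.
      set (p := prodx x j) in *. set (G := INR g) in *.
      assert (Ha : 0 < a) by (apply Xpos; lia).
      assert (Ha1 : a <= x 1%nat) by (apply Rge_le, (mono g n x H); lia).
      rewrite <- E1 in Hk1.
      assert (Eq1 : sumx x n - sumx x j = t + a) by (unfold t; ring).
      rewrite Eq1 in Hk0.
      assert (Eq2 : sumx x n - (sumx x j + a + a) = t - a) by (unfold t; ring).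
      rewrite Eq2 in Hk1.
      rewrite E2 in Hk1.
      assert (I1 : G * t <= G * (t + a) * a) by (rewrite <- E2; apply Rmult_le_compat_r; lra).
      assert (I1' : t <= (t + a) * a).
      { apply (Rmult_le_reg_l G); [lra|]. rewrite <- Rmult_assoc. exact I1. }
      assert (I2' : t * a <= t - a).
      { apply (Rmult_le_reg_l G); [lra|]. rewrite <- Rmult_assoc. exact Hk1. }
      assert (a <= a * a) by nra.
      assert (1 <= a) by nra. lra.
  - intros k Hk Heq.
    assert (Heq0 : forall i, (i <= k)%nat -> prodx x i = INR g * tailsum x i n).
    { intros i Hi. destruct i. 
      - simpl. unfold tailsum. destruct H as [_ [_ [H3 _]]]. rewrite H3. simpl.
        rewrite Rminus_0_r, Rinv_r. lra. apply not_0_INR; lia.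
      - apply Heq; lia. }
    assert (Key : forall j, (S j <= k)%nat -> x (S j) * (prodx x j + INR g) = prodx x j).
    { intros j Hj. pose proof (Heq0 (S j) Hj) as A. pose proof (Heq0 j ltac:(lia)) as B.
      change (prodx x (S j)) with (prodx x j * x (S j)) in A.
      unfold tailsum in A, B. simpl sumx in A. lra. }
    assert (PF : forall i, (i <= k)%nat -> prodx x i * (INR (sylv g (S i)) - 1) = INR g).
    { induction i; intros Hi.
      - simpl. rewrite plus_INR. simpl. ring.
      - specialize (IHi ltac:(lia)). pose proof (Key i Hi) as K.
        rewrite (sylv_SR g (S i) Hg ltac:(lia)).
        set (a := INR (sylv g (S i)) - 1) in *.
        replace (INR (sylv g (S i))) with (a + 1) by (unfold a; ring).
        change (prodx x (S i)) with (prodx x i * x (S i)).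
        assert (Pn0 : prodx x i <> 0) by (intro Z; rewrite Z in IHi; lra).
        assert (XA : x (S i) * (1 + a) = 1).
        { apply (Rmult_eq_reg_l (prodx x i)); [|auto].
          rewrite Rmult_1_r. rewrite <- K at 2. rewrite <- IHi. ring. }
        transitivity ((x (S i) * (1 + a)) * (prodx x i * a)); [unfold a; ring|].
        rewrite XA, IHi. ring. }
    intros i Hi. destruct i as [|j]. lia.
    pose proof (Key j ltac:(lia)) as K. pose proof (PF j ltac:(lia)) as P.
    pose proof (sylv_ge2 g Hg (S j) ltac:(lia)) as S2.
    assert (Bpos : 2 <= INR (sylv g (S j))) by (apply (le_INR 2); lia).
    set (b := INR (sylv g (S j))) in *.
    assert (Pn0 : prodx x j <> 0) by (intro Z; rewrite Z in P; lra).
    assert (XB : x (S j) * b = 1).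
    { apply (Rmult_eq_reg_l (prodx x j)); [|auto].
      rewrite Rmult_1_r. rewrite <- K at 2. rewrite <- P. ring. }
    apply (Rmult_eq_reg_r b); [|lra]. rewrite XB, Rinv_l; lra.
Qed.
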